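(* Let $\Omega\subset\mathbb{R}^d$ be an open set and let $(g^{ij})_{1\le i,j\le d}$ be a symmetric matrix of functions on $\Omega$ which is positive definite at every point of $\Omega$ and such that every entry $g^{ij}$ is a polynomial in $(x_1,\dots,x_d)$ of degree at most $2$. Write $\Gamma(f,g)=\sum_{i,j} g^{ij}\partial_i f\,\partial_j g$. Let $P_1,\dots,P_n$ be polynomials which are positive on $\Omega$ and such that for every $r\in\{1,\dots,n\}$ and every $i\in\{1,\dots,d\}$, $$\Gamma(x_i,\log P_r)=\sum_{j} g^{ij}\,\partial_j \log P_r = L_{i,r},$$ where each $L_{i,r}$ is a polynomial of degree at most $1$. For $(\alpha_1,\dots,\alpha_n)\in\mathbb{R}^n$, let $\rho=P_1^{\alpha_1}\cdots P_n^{\alpha_n}$ and let $\mathcal{L}_{\alpha_1,\dots,\alpha_n}$ be the operator on smooth functions on $\Omega$ given by $$\mathcal{L}_{\alpha_1,\dots,\alpha_n} f=\frac{1}{\rho}\sum_{i,j}\partial_i\big(\rho\, g^{ij}\partial_j f\big)=\sum_{i,j}g^{ij}\partial^2_{ij}f+\sum_i b^i\partial_i f,\qquad b^i=\sum_j\big(\partial_j g^{ij}+g^{ij}\partial_j\log\rho\big).$$ Then there exist constants $c_1,\dots,c_n$ (not depending on the $\alpha$'s) such that for every $(\alpha_1,\dots,\alpha_n)$ the function $h=P_1^{-\alpha_1}\cdots P_n^{-\alpha_n}$ satisfies $$\mathcal{L}_{\alpha_1,\dots,\alpha_n}(h)=-\Big(\sum_{r}\alpha_r c_r\Big)h,$$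 and moreover the $h$-transform of $\mathcal{L}_{\alpha_1,\dots,\alpha_n}$ by $h$ equals $\mathcal{L}_{-\alpha_1,\dots,-\alpha_n}$.
   Context: $\mathcal{L}_{\alpha_1,\dots,\alpha_n}$ is the symmetric diffusion operator associated with the carré du champ $\Gamma$ and the measure $\mu_{\alpha_1,\dots,\alpha_n}$ with density $P_1^{\alpha_1}\cdots P_n^{\alpha_n}$ with respect to Lebesgue measure on $\Omega$. For a diffusion operator $\mathcal{L}$ and a positive function $h$ with $\mathcal{L}(h)=\lambda h$ for a constant $\lambda$, the $h$-transform of $\mathcal{L}$ is the operator $\mathcal{L}^{(h)}(f)=\frac{1}{h}\mathcal{L}(hf)-\lambda f$ (equivalently $\mathcal{L}^{(h)}f=\mathcal{L}f+2\Gamma(\log h,f)$). *)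

(* Defs.v *)
From HB Require Import structures.
From mathcomp Require Import all_boot all_order all_algebra.
From mathcomp Require Import all_classical all_reals all_analysis.
Set Implicit Arguments. Unset Strict Implicit. Unset Printing Implicit Defensive.
Import Order.TTheory GRing.Theory Num.Theory.
Import numFieldNormedType.Exports.
Local Open Scope ring_scope.
Local Open Scope classical_set_scope.

(* Points of R^d are row vectors 'rV[R]_d; the i-th coordinate of x is x 0 i. *)
Section Defs.
Variables (R : realType) (d : nat).
Local Notation V := 'rV[R]_d.

Definition unitv (i : 'I_d) : V := delta_mx 0 i.
Definition partial (i : 'I_d) (f : V -> R) : V -> R :=
  fun x => 'D_(unitv i) f x.

Fixpoint ipartial (s : seq 'I_d) (f : V -> R) : V -> R :=
  if s is i :: s' then partial i (ipartial s' f) else f.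

Definition smooth_on (Omega : set V) (f : V -> R) :=
  forall (s : seq 'I_d) (x : V), Omega x -> differentiable (ipartial s f) x.

Definition poly_deg_le (m : nat) (f : V -> R) :=
  exists (N : nat) (c : 'I_N -> R) (e : 'I_N -> 'I_d -> nat),
    (forall k, (\sum_(i < d) e k i <= m)%N) /\
    forall x : V, f x = \sum_(k < N) c k * \prod_(i < d) x 0 i ^+ e k i.

Definition poly_fun (f : V -> R) := exists m, poly_deg_le m f.

Definition carre_du_champ (g : 'I_d -> 'I_d -> V -> R) (f h : V -> R) : V -> R :=
  fun x => \sum_(i < d) \sum_(j < d) g i j x * partial i f x * partial j h x.

Definition rho_of (n : nat) (P : 'I_n -> V -> R) (alpha : 'I_n -> R) : V -> R :=
  fun x => \prod_(r < n) (P r x) `^ (alpha r).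

Definition drift (g : 'I_d -> 'I_d -> V -> R) (rho : V -> R) (i : 'I_d) : V -> R :=
  fun x => \sum_(j < d)
     (partial j (g i j) x + g i j x * partial j (fun y => ln (rho y)) x).

Definition Lop (g : 'I_d -> 'I_d -> V -> R) (n : nat) (P : 'I_n -> V -> R)
    (alpha : 'I_n -> R) (f : V -> R) : V -> R :=
  fun x => \sum_(i < d) \sum_(j < d) g i j x * partial i (partial j f) x
         + \sum_(i < d) drift g (rho_of P alpha) i x * partial i f x.

(* h-transform of an operator L by h with L h = lambda h:
   L^(h) f = (1/h) L (h f) - lambda f *)
Definition htransform (L : (V -> R) -> V -> R) (h : V -> R) (lambda : R)
    (f : V -> R) : V -> R :=
  fun x => L (fun y => h y * f y) x / h x - lambda * f x.

End Defs.

(* Main.v *)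
Require Import Defs.
From HB Require Import structures.
From mathcomp Require Import all_boot all_order all_algebra.
From mathcomp Require Import all_classical all_reals all_analysis.
From mathcomp Require Import ring.
Import Order.TTheory GRing.Theory Num.Theory.
Import numFieldNormedType.Exports.
Local Open Scope ring_scope.
Local Open Scope classical_set_scope.

Section Wr.
Variables (R : realType) (U : normedModType R).
Lemma dD (f g : U -> R) (x v : U) : derivable f x v -> derivable g x v ->
  derivable (fun y => f y + g y) x v /\
  'D_v (fun y => f y + g y) x = 'D_v f x + 'D_v g x.
Proof. by move=> df dg; split; [exact: derivableD | exact: deriveD]. Qed.

Lemma dM (f g : U -> R) (x v : U) : derivable f x v -> derivable g x v ->
  derivable (fun y => f y * g y) x v /\
  'D_v (fun y => f y * g y) x = f x * 'D_v g x + g x * 'D_v f x.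
Proof. by move=> df dg; split; [exact: derivableM | exact: deriveM]. Qed.

Lemma dC (c : R) (x v : U) : derivable (fun _ : U => c) x v /\ 'D_v (fun _ : U => c) x = 0.
Proof. by split; [exact: derivable_cst | exact: derive_cst]. Qed.

End Wr.
Arguments dD {R U f g x v}.
Arguments dM {R U f g x v}.
Arguments dC {R U}.

Section Gen.
Variables (R : realType) (d : nat).
Local Notation V := 'rV[R]_d.

Lemma derive_line (f : V -> R) x v :
  'D_v f x = 'D_1 (fun h : R => f (h *: v + x)) 0.
Proof.
rewrite /derive; set g1 := fun h => h^-1 *: _; set g2 := fun h => h^-1 *: _.
suff -> : g1 = g2 by [].
by rewrite funeqE /g1 /g2 => h /=; rewrite addr0 scale0r add0r [_%:A]mulr1.
Qed.

Lemma comp_real (u : V -> R) (G : R -> R) x v :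
  derivable u x v -> derivable G (u x) 1 ->
  derivable (G \o u) x v /\ 'D_v (G \o u) x = (G^`())%classic (u x) * 'D_v u x.
Proof.
move=> du dG.
have du1 := (derivable1P u x v).1 du.
pose phi := fun h : R => u (h *: v + x).
have phi0 : phi 0 = u x by rewrite /phi scale0r add0r.
have dG' : derivable G (phi 0) 1 by rewrite phi0.
have dc : derivable (G \o phi) 0 1.
  apply/derivable1_diffP; apply: differentiable_comp.
    exact/derivable1_diffP.
  exact/derivable1_diffP.
split; first exact/derivable1P.
rewrite derive_line (derive_line u) -!derive1E.
have -> : (fun h : R => (G \o u) (h *: v + x)) = G \o phi by [].
have := @derive1_comp R phi G 0 du1 dG'.
by move=> ->; rewrite phi0.
Qed.



Lemma dS N (F : 'I_N -> V -> R) x v : (forall k, derivable (F k) x v) ->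
  derivable (fun y => \sum_(k < N) F k y) x v /\
  'D_v (fun y => \sum_(k < N) F k y) x = \sum_(k < N) 'D_v (F k) x.
Proof.
move=> dF; have -> : (fun y => \sum_(k < N) F k y) = \sum_(k < N) F k.
  by rewrite fct_sumE.
by split; [exact: derivable_sum | exact: derive_sum].
Qed.

Lemma dcoord j x v : derivable (fun y : V => y 0 j) x v /\
  'D_v (fun y : V => y 0 j) x = v 0 j.
Proof.
split; first exact/diff_derivable/differentiable_coord.
rewrite derive_line.
have -> : (fun h : R => (h *: v + x) 0 j) = (fun h => h * v 0 j + x 0 j).
  by apply/funext => h; rewrite !mxE.
have dl : derivable (fun h : R => h * v 0 j) 0 1.
  by have [] := @dM R R^o (fun h : R => h) (fun _ => v 0 j) 0 1
    ltac:(exact: derivable_id) ltac:(exact: derivable_cst).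
have [_ ->] := @dD R R^o (fun h : R => h * v 0 j) (fun _ => x 0 j) 0 1
  dl ltac:(exact: derivable_cst).
have [_ ->] := @dM R R^o (fun h : R => h) (fun _ => v 0 j) 0 1
  ltac:(exact: derivable_id) ltac:(exact: derivable_cst).
by rewrite derive_id !derive_cst mul0r mulr1 add0r addr0.
Qed.

Lemma loc (U : set V) (f g : V -> R) x v : open U -> U x ->
  (forall y, U y -> f y = g y) ->
  'D_v f x = 'D_v g x /\ (derivable f x v -> derivable g x v).
Proof.
move=> oU Ux fg.
have nb : \forall y \near x, f y = g y.
  apply: filterS (open_nbhs_nbhs (conj oU Ux)) => y Uy; exact: fg.
split; first exact: near_eq_derive.
exact: near_eq_derivable.
Qed.

Inductive Pol : (V -> R) -> Prop :=
| Pcst c : Pol (fun _ => c)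
| Pcoord j : Pol (fun y => y 0 j)
| Padd f g : Pol f -> Pol g -> Pol (fun y => f y + g y)
| Pmul f g : Pol f -> Pol g -> Pol (fun y => f y * g y).

Lemma Pol_der f : Pol f -> forall i, (forall x, derivable f x (unitv R i)) /\ Pol (partial i f).
Proof.
elim => [c|j|f1 f2 Q1 IH1 Q2 IH2|f1 f2 Q1 IH1 Q2 IH2] i.
- split=> [x|]; first exact: derivable_cst.
  have -> : partial i (fun _ : V => c) = fun _ => 0.
    by apply/funext => y; rewrite /partial derive_cst.
  exact: Pcst.
- split=> [x|]; first by have [] := dcoord j x (unitv R i).
  have -> : partial i (fun y : V => y 0 j) = fun _ => unitv R i 0 j.
    by apply/funext => y; rewrite /partial (dcoord j y (unitv R i)).2.
  exact: Pcst.
- have [d1 P1] := IH1 i; have [d2 P2] := IH2 i.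
  split=> [x|]; first by have [] := dD (d1 x) (d2 x).
  have -> : partial i (fun y => f1 y + f2 y) = fun y => partial i f1 y + partial i f2 y.
    by apply/funext => y; rewrite /partial (dD (d1 y) (d2 y)).2.
  exact: Padd.
- have [d1 P1] := IH1 i; have [d2 P2] := IH2 i.
  split=> [x|]; first by have [] := dM (d1 x) (d2 x).
  have -> : partial i (fun y => f1 y * f2 y) =
     fun y => f1 y * partial i f2 y + f2 y * partial i f1 y.
    by apply/funext => y; rewrite /partial (dM (d1 y) (d2 y)).2.
  exact: (Padd _ _ (Pmul _ _ Q1 P2) (Pmul _ _ Q2 P1)).
Qed.

Lemma Pol_sum (I : Type) (s : seq I) (F : I -> V -> R) :
  (forall k, Pol (F k)) -> Pol (fun y => \sum_(k <- s) F k y).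
Proof.
move=> PF; elim: s => [|a s IH].
  have -> : (fun y => \sum_(k <- [::]) F k y) = fun _ => 0.
    by apply/funext => y; rewrite big_nil.
  exact: Pcst.
have -> : (fun y => \sum_(k <- a :: s) F k y) = fun y => F a y + \sum_(k <- s) F k y.
  by apply/funext => y; rewrite big_cons.
exact: Padd.
Qed.

Lemma Pol_prod (I : Type) (s : seq I) (F : I -> V -> R) :
  (forall k, Pol (F k)) -> Pol (fun y => \prod_(k <- s) F k y).
Proof.
move=> PF; elim: s => [|a s IH].
  have -> : (fun y => \prod_(k <- [::]) F k y) = fun _ => 1.
    by apply/funext => y; rewrite big_nil.
  exact: Pcst.
have -> : (fun y => \prod_(k <- a :: s) F k y) = fun y => F a y * \prod_(k <- s) F k y.
  by apply/funext => y; rewrite big_cons.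
exact: Pmul.
Qed.

Lemma Pol_pow j m : Pol (fun y : V => y 0 j ^+ m).
Proof.
elim: m => [|m IH].
  have -> : (fun y : V => y 0 j ^+ 0) = fun _ => 1 by apply/funext => y.
  exact: Pcst.
have -> : (fun y : V => y 0 j ^+ m.+1) = fun y => y 0 j * y 0 j ^+ m.
  by apply/funext => y; rewrite exprS.
apply: Pmul => //; exact: Pcoord.
Qed.

Lemma Pol_poly m f : poly_deg_le m f -> Pol f.
Proof.
case=> N [c [e [_ fE]]].
have -> : f = fun x => \sum_(k < N) c k * \prod_(i < d) x 0 i ^+ e k i.
  by apply/funext.
apply: Pol_sum => k; apply: Pmul; first exact: Pcst.
apply: Pol_prod => i; exact: Pol_pow.
Qed.


Inductive Aff : (V -> R) -> Prop :=
| Acst c : Aff (fun _ => c)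
| Acoord j : Aff (fun y => y 0 j)
| Aadd f g : Aff f -> Aff g -> Aff (fun y => f y + g y)
| Ascal c f : Aff f -> Aff (fun y => c * f y).

Lemma Aff_der f : Aff f -> forall i, exists a,
  forall x, derivable f x (unitv R i) /\ partial i f x = a.
Proof.
elim => [c|j|f1 f2 _ IH1 _ IH2|c f1 _ IH1] i.
- by exists 0 => x; split; [exact: derivable_cst | exact: derive_cst].
- by exists (unitv R i 0 j) => x; exact: dcoord.
- have [a1 H1] := IH1 i; have [a2 H2] := IH2 i.
  exists (a1 + a2) => x; have [d1 e1] := H1 x; have [d2 e2] := H2 x.
  have [D E] := dD d1 d2; split=> //; by rewrite /partial E -/(partial i f1 x) -/(partial i f2 x) e1 e2.
- have [a1 H1] := IH1 i.
  exists (c * a1) => x; have [d1 e1] := H1 x.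
  have [D E] := dM (dC c x (unitv R i)).1 d1; split=> //.
  by rewrite /partial E (dC c x (unitv R i)).2 -/(partial i f1 x) e1 mulr0 addr0.
Qed.

Lemma Aff_sum (I : Type) (s : seq I) (F : I -> V -> R) :
  (forall k, Aff (F k)) -> Aff (fun y => \sum_(k <- s) F k y).
Proof.
move=> PF; elim: s => [|a s IH].
  have -> : (fun y => \sum_(k <- [::]) F k y) = fun _ => 0.
    by apply/funext => y; rewrite big_nil.
  exact: Acst.
have -> : (fun y => \sum_(k <- a :: s) F k y) = fun y => F a y + \sum_(k <- s) F k y.
  by apply/funext => y; rewrite big_cons.
exact: Aadd.
Qed.

Lemma mono0 (s : seq 'I_d) (e : 'I_d -> nat) (x : 'I_d -> R) :
  (\sum_(i <- s) e i = 0)%N ->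
  \prod_(i <- s) x i ^+ e i = 1 /\ \sum_(i <- s) (e i)%:R * (x i - 1) = 0.
Proof.
elim: s => [|a s IH]; first by rewrite !big_nil.
rewrite !big_cons => /eqP; rewrite addn_eq0 => /andP[/eqP -> /eqP /IH [-> ->]].
by rewrite expr0 mul1r mul0r addr0.
Qed.

Lemma mono1 (s : seq 'I_d) (e : 'I_d -> nat) (x : 'I_d -> R) :
  (\sum_(i <- s) e i <= 1)%N ->
  \prod_(i <- s) x i ^+ e i = 1 + \sum_(i <- s) (e i)%:R * (x i - 1).
Proof.
elim: s => [|a s IH]; first by rewrite !big_nil addr0.
rewrite !big_cons; case: (e a) => [|[|m]] H.
- by rewrite expr0 mul1r mul0r add0r IH.
- have H0 : (\sum_(i <- s) e i = 0)%N by move: H; rewrite add1n ltnS leqn0 => /eqP.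
  have [-> ->] := mono0 s e x H0.
  by rewrite expr1 mulr1 mul1r addr0 addrC subrK.
- by move: H; rewrite !addSn.
Qed.

Lemma Aff_poly1 f : poly_deg_le 1 f -> Aff f.
Proof.
case=> N [c [e [He fE]]].
have -> : f = fun x => \sum_(k < N) c k * (1 + \sum_(i < d) (e k i)%:R * (x 0 i - 1)).
  by apply/funext => x; rewrite fE; apply: eq_bigr => k _; rewrite mono1.
apply: Aff_sum => k; apply: Ascal; apply: Aadd; first exact: Acst.
apply: Aff_sum => i; apply: Ascal; apply: Aadd; [exact: Acoord | exact: Acst].
Qed.

End Gen.
Arguments Pol {R d}.
Arguments Aff {R d}.
Arguments Pol_der {R d f}.
Arguments Aff_der {R d f}.
Arguments Pol_poly {R d m f}.
Arguments Aff_poly1 {R d f}.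
Arguments loc {R d}.
Arguments comp_real {R d u G x v}.
Arguments dS {R d}.
Arguments dcoord {R d}.

Section Alg.
Variables (R : realType) (d : nat).
Implicit Types (G Dg S FF Hij : 'I_d -> 'I_d -> R) (Q F : 'I_d -> R).

Lemma dsD (A B : 'I_d -> 'I_d -> R) :
  \sum_(i < d) \sum_(j < d) A i j + \sum_(i < d) \sum_(j < d) B i j =
  \sum_(i < d) \sum_(j < d) (A i j + B i j).
Proof. by rewrite -big_split; apply: eq_bigr => i _; rewrite -big_split. Qed.
Lemma dsB (A B : 'I_d -> 'I_d -> R) :
  \sum_(i < d) \sum_(j < d) A i j - \sum_(i < d) \sum_(j < d) B i j =
  \sum_(i < d) \sum_(j < d) (A i j - B i j).
Proof. by rewrite -sumrB; apply: eq_bigr => i _; rewrite -sumrB. Qed.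
Lemma dsM (c : R) (A : 'I_d -> 'I_d -> R) :
  c * \sum_(i < d) \sum_(j < d) A i j = \sum_(i < d) \sum_(j < d) (c * A i j).
Proof. by rewrite mulr_sumr; apply: eq_bigr => i _; rewrite mulr_sumr. Qed.
Lemma dsl (B : 'I_d -> 'I_d -> R) (C : 'I_d -> R) :
  \sum_(i < d) (\sum_(j < d) B i j) * C i = \sum_(i < d) \sum_(j < d) (B i j * C i).
Proof. by apply: eq_bigr => i _; rewrite mulr_suml. Qed.

Lemma alg1 G Dg S Q (H : R) :
  \sum_(i < d) \sum_(j < d) G i j * (H * Q i * Q j + H * S i j) +
  \sum_(i < d) (\sum_(j < d) (Dg i j + G i j * - Q j)) * (H * Q i) =
  H * (\sum_(i < d) \sum_(j < d) (G i j * S i j + Dg i j * Q i)).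
Proof.
under [X in _ + X]eq_bigr => i _ do rewrite mulr_suml.
rewrite -big_split mulr_sumr; apply: eq_bigr => i _ /=.
rewrite -big_split mulr_sumr; apply: eq_bigr => j _ /=.
ring.
Qed.

Lemma alg2 G Dg Q F FF Hij (Hx fx : R) :
  (forall i j, G i j = G j i) ->
  \sum_(i < d) \sum_(j < d) G i j *
     ((Hx * FF i j + F j * (Hx * Q i)) + (fx * Hij i j + (Hx * Q j) * F i)) +
  \sum_(i < d) (\sum_(j < d) (Dg i j + G i j * - Q j)) * (Hx * F i + fx * (Hx * Q i))
  = fx * (\sum_(i < d) \sum_(j < d) G i j * Hij i j +
          \sum_(i < d) (\sum_(j < d) (Dg i j + G i j * - Q j)) * (Hx * Q i)) +
    Hx * (\sum_(i < d) \sum_(j < d) G i j * FF i j +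
          \sum_(i < d) (\sum_(j < d) (Dg i j + G i j * Q j)) * F i).
Proof.
move=> Gs.
have sw : \sum_(i < d) \sum_(j < d) G i j * (F j * Q i) =
          \sum_(i < d) \sum_(j < d) G i j * (Q j * F i).
  rewrite exchange_big; apply: eq_bigr => i _; apply: eq_bigr => j _.
  by rewrite Gs [F _ * _]mulrC.
have T0 : Hx * (\sum_(i < d) \sum_(j < d) G i j * (F j * Q i) -
          \sum_(i < d) \sum_(j < d) G i j * (Q j * F i)) = 0.
  by rewrite sw subrr mulr0.
rewrite -[RHS]addr0 -[X in _ = _ + X]T0.
rewrite !dsl ?dsD ?dsB ?dsM ?dsD ?dsB ?dsM ?dsD; apply: eq_bigr => i _; apply: eq_bigr => j _.
ring.
Qed.
End Alg.

Section Main.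
Variables (R : realType) (d n : nat).
Local Notation V := 'rV[R]_d.
Variables (Omega : set V) (g : 'I_d -> 'I_d -> V -> R) (P : 'I_n -> V -> R).
Hypotheses (oO : open Omega) (gpol : forall i j, Pol (g i j))
  (Ppol : forall r, Pol (P r)) (Ppos : forall r x, Omega x -> 0 < P r x).

Let l r := fun y => ln (P r y).

Lemma Pder r i x : derivable (P r) x (unitv R i).
Proof. by have [] := Pol_der (Ppol r) i. Qed.

Lemma Pder2 r i j x : derivable (partial i (P r)) x (unitv R j).
Proof. have [_ Q] := Pol_der (Ppol r) i; by have [] := Pol_der Q j. Qed.

Lemma gder i j k x : derivable (g i j) x (unitv R k).
Proof. by have [] := Pol_der (gpol i j) k. Qed.

Lemma lder r i x : Omega x -> derivable (l r) x (unitv R i) /\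
  partial i (l r) x = (P r x)^-1 * partial i (P r) x.
Proof.
move=> Ox; have hl := is_derive1_ln (Ppos r x Ox).
have dl : derivable (@ln R) (P r x) 1 by case: hl.
have [D E] := comp_real (Pder r i x) dl.
split; first exact: D.
have -> : partial i (l r) x = 'D_(unitv R i) (@ln R \o P r) x by [].
rewrite E derive1E.
by case: hl => _ ->.
Qed.

Lemma lder2 r i j x : Omega x -> derivable (partial i (l r)) x (unitv R j).
Proof.
move=> Ox.
have [_ H] := @loc R d Omega (fun y => (P r y)^-1 * partial i (P r) y) (partial i (l r)) x
  (unitv R j) oO Ox (fun y Oy => esym (lder r i y Oy).2).
apply: H; apply: derivableM (Pder2 r i j x).
apply: derivableV; first by rewrite gt_eqF // Ppos.
exact: Pder.
Qed.


Let q (b : 'I_n -> R) j y := \sum_(r < n) b r * partial j (l r) y.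
Let G (b : 'I_n -> R) y := \sum_(r < n) b r * l r y.

Lemma rhoE b y : Omega y -> rho_of P b y = expR (G b y).
Proof.
move=> Oy; rewrite /rho_of /G expR_sum; apply: eq_bigr => r _.
by rewrite /powR (gt_eqF (Ppos r y Oy)).
Qed.

Lemma Gder b j x : Omega x -> derivable (G b) x (unitv R j) /\
  partial j (G b) x = q b j x.
Proof.
move=> Ox.
have H : forall r, derivable (fun y => b r * l r y) x (unitv R j).
  by move=> r; have [] := dM (dC (b r) x (unitv R j)).1 (lder r j x Ox).1.
have [D E] := dS n (fun r y => b r * l r y) x (unitv R j) H.
split; first exact: D.
rewrite /partial E; apply: eq_bigr => r _.
have [_ ->] := dM (dC (b r) x (unitv R j)).1 (lder r j x Ox).1.
by rewrite (dC (b r) x (unitv R j)).2 mulr0 addr0.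
Qed.

Lemma qder b j i x : Omega x -> derivable (q b j) x (unitv R i) /\
  partial i (q b j) x = \sum_(r < n) b r * partial i (partial j (l r)) x.
Proof.
move=> Ox.
have H : forall r, derivable (fun y => b r * partial j (l r) y) x (unitv R i).
  by move=> r; have [] := dM (dC (b r) x (unitv R i)).1 (lder2 r j i x Ox).
have [D E] := dS n (fun r y => b r * partial j (l r) y) x (unitv R i) H.
split; first exact: D.
rewrite /partial E; apply: eq_bigr => r _.
have [_ ->] := dM (dC (b r) x (unitv R i)).1 (lder2 r j i x Ox).
by rewrite (dC (b r) x (unitv R i)).2 mulr0 addr0.
Qed.

Lemma lnrho b j x : Omega x ->
  partial j (fun y => ln (rho_of P b y)) x = q b j x.
Proof.
move=> Ox.
have [E _] := @loc R d Omega (G b) (fun y => ln (rho_of P b y)) x (unitv R j) oO Ox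
  (fun y Oy => esym (etrans (congr1 (@ln R) (rhoE b y Oy)) (expRK _))).
rewrite /partial -E; exact: (Gder b j x Ox).2.
Qed.

Lemma rhoder b j x : Omega x -> derivable (rho_of P b) x (unitv R j) /\
  partial j (rho_of P b) x = rho_of P b x * q b j x.
Proof.
move=> Ox.
have de : derivable (@expR R) (G b x) 1 by case: (is_derive_expR (G b x)).
have [D E] := comp_real (Gder b j x Ox).1 de.
have [E' D'] := @loc R d Omega (@expR R \o G b) (rho_of P b) x (unitv R j) oO Ox
  (fun y Oy => esym (rhoE b y Oy)).
split; first exact: D' D.
rewrite /partial -E' E -/(partial j (G b) x) (Gder b j x Ox).2 derive1E (rhoE b x Ox).
by case: (is_derive_expR (G b x)) => _ ->.
Qed.

Lemma rhoder2 b i j x : Omega x ->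
  derivable (partial j (rho_of P b)) x (unitv R i) /\
  partial i (partial j (rho_of P b)) x =
   partial i (rho_of P b) x * q b j x +
   rho_of P b x * \sum_(r < n) b r * partial i (partial j (l r)) x.
Proof.
move=> Ox.
have [E' D'] := @loc R d Omega (fun y => rho_of P b y * q b j y)
  (partial j (rho_of P b)) x (unitv R i) oO Ox
  (fun y Oy => esym (rhoder b j y Oy).2).
have [D E] := dM (rhoder b i x Ox).1 (qder b j i x Ox).1.
split; first exact: D' D.
rewrite /partial -E' E -/(partial i (q b j) x) (qder b j i x Ox).2.
by rewrite addrC mulrC.
Qed.


Lemma qN b j y : q (fun r => - b r) j y = - q b j y.
Proof. by rewrite /q -sumrN; apply: eq_bigr => r _; rewrite mulNr. Qed.

Variables (L : 'I_d -> 'I_n -> V -> R).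
Hypotheses (gsym : forall i j x, Omega x -> g i j x = g j i x)
  (Laff : forall i r, Aff (L i r))
  (LE : forall i r x, Omega x ->
       carre_du_champ g (fun y => y 0 i) (fun y => ln (P r y)) x = L i r x).

Let c r := \sum_(i < d) partial i (L i r) 0.

Lemma gsymd i j k x : Omega x -> partial k (g i j) x = partial k (g j i) x.
Proof.
move=> Ox.
exact: (@loc R d Omega (g i j) (g j i) x (unitv R k) oO Ox (fun y Oy => gsym i j y Oy)).1.
Qed.

Lemma cdc i (f : V -> R) y :
  carre_du_champ g (fun y => y 0 i) f y = \sum_(j < d) g i j y * partial j f y.
Proof.
rewrite /carre_du_champ (bigD1 i) //= [X in _ + X]big1 ?addr0.
  apply: eq_bigr => j _.
  by rewrite /partial (dcoord i y (unitv R i)).2 /unitv mxE eqxx /= eqxx mulr1.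
move=> a ai; apply: big1 => j _.
rewrite /partial (dcoord i y (unitv R a)).2 /unitv mxE eqxx /=.
by rewrite eq_sym (negbTE ai) mulr0 mul0r.
Qed.

Lemma Kid r x : Omega x ->
  \sum_(i < d) \sum_(j < d) (g i j x * partial i (partial j (l r)) x +
     partial j (g i j) x * partial i (l r) x) = c r.
Proof.
move=> Ox.
have Li : forall i, partial i (L i r) x = \sum_(j < d)
    (g i j x * partial i (partial j (l r)) x + partial j (l r) x * partial i (g i j) x).
  move=> i.
  have [E _] := @loc R d Omega (fun y => \sum_(j < d) g i j y * partial j (l r) y)
    (L i r) x (unitv R i) oO Ox (fun y Oy => etrans (esym (cdc i (l r) y)) (LE i r y Oy)).
  rewrite /partial -E.
  have H : forall j, derivable (fun y => g i j y * partial j (l r) y) x (unitv R i).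
    by move=> j; have [] := dM (gder i j i x) (lder2 r j i x Ox).
  have [_ ->] := dS d (fun j y => g i j y * partial j (l r) y) x (unitv R i) H.
  apply: eq_bigr => j _.
  by have [_ ->] := dM (gder i j i x) (lder2 r j i x Ox).
have -> : c r = \sum_(i < d) partial i (L i r) x.
  apply: eq_bigr => i _; have [a Ha] := Aff_der (Laff i r) i.
  by rewrite (Ha 0).2 (Ha x).2.
under [RHS]eq_bigr => i _ do rewrite Li.
rewrite -!dsD; congr (_ + _).
rewrite exchange_big; apply: eq_bigr => i _; apply: eq_bigr => j _.
by rewrite gsymd // mulrC.
Qed.


Lemma drE b i x : Omega x ->
  drift g (rho_of P b) i x = \sum_(j < d) (partial j (g i j) x + g i j x * q b j x).
Proof. by move=> Ox; apply: eq_bigr => j _; rewrite lnrho. Qed.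

Lemma part1_raw (a : 'I_n -> R) x : Omega x ->
  let b := fun r => - a r in
  let H := rho_of P b x in
  Lop g P a (rho_of P b) x =
  \sum_(i < d) \sum_(j < d) g i j x * (H * q b i x * q b j x +
       H * (\sum_(r < n) b r * partial i (partial j (l r)) x)) +
  \sum_(i < d) (\sum_(j < d) (partial j (g i j) x + g i j x * - q b j x)) *
       (H * q b i x).
Proof.
move=> Ox b H; rewrite /Lop; congr (_ + _).
  apply: eq_bigr => i _; apply: eq_bigr => j _.
  by rewrite (rhoder2 b i j x Ox).2 (rhoder b i x Ox).2.
apply: eq_bigr => i _; rewrite (drE a i x Ox) (rhoder b i x Ox).2; congr (_ * _).
by apply: eq_bigr => j _; rewrite /b qN opprK.
Qed.

Lemma part1 (a : 'I_n -> R) x : Omega x ->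
  Lop g P a (rho_of P (fun r => - a r)) x =
  - (\sum_(r < n) a r * c r) * rho_of P (fun r => - a r) x.
Proof.
move=> Ox; rewrite (part1_raw a x Ox) /=.
set b := fun r => - a r; set H := rho_of P b x.
rewrite (@alg1 R d (fun i j => g i j x) (fun i j => partial j (g i j) x)
  (fun i j => \sum_(r < n) b r * partial i (partial j (l r)) x) (fun i => q b i x) H).
rewrite mulrC; congr (_ * _).
have -> : - (\sum_(r < n) a r * c r) = \sum_(r < n) b r * c r.
  by rewrite -sumrN; apply: eq_bigr => r _; rewrite mulNr.
under [RHS]eq_bigr => r _ do rewrite -(Kid r x Ox) mulr_sumr.
rewrite [RHS]exchange_big; apply: eq_bigr => i _ /=.
under [RHS]eq_bigr => r _ do rewrite mulr_sumr.
rewrite [RHS]exchange_big; apply: eq_bigr => j _ /=.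
rewrite /q mulr_sumr mulr_sumr -big_split; apply: eq_bigr => r _ /=.
ring.
Qed.


Lemma part2 (a : 'I_n -> R) (f : V -> R) x : smooth_on Omega f -> Omega x ->
  htransform (Lop g P a) (rho_of P (fun r => - a r)) (- (\sum_(r < n) a r * c r)) f x
  = Lop g P (fun r => - a r) f x.
Proof.
move=> sm Ox.
set b := fun r => - a r.
have df : forall y, Omega y -> forall k, derivable f y (unitv R k).
  by move=> y Oy k; apply: diff_derivable; exact: (sm [::] y Oy).
have df2 : forall j k, derivable (partial j f) x (unitv R k).
  by move=> j k; apply: diff_derivable; exact: (sm [:: j] x Ox).
have d1 : forall j y, Omega y -> partial j (fun z => rho_of P b z * f z) y =
    rho_of P b y * partial j f y + f y * partial j (rho_of P b) y.
  by move=> j y Oy; exact: (dM (rhoder b j y Oy).1 (df y Oy j)).2.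
have d2 : forall i j, partial i (partial j (fun z => rho_of P b z * f z)) x =
    (rho_of P b x * partial i (partial j f) x + partial j f x * partial i (rho_of P b) x)
    + (f x * partial i (partial j (rho_of P b)) x + partial j (rho_of P b) x * partial i f x).
  move=> i j.
  have [E _] := @loc R d Omega
    (fun y => rho_of P b y * partial j f y + f y * partial j (rho_of P b) y)
    (partial j (fun z => rho_of P b z * f z)) x (unitv R i) oO Ox
    (fun y Oy => esym (d1 j y Oy)).
  rewrite /partial -E.
  have [_ ->] := dD (dM (rhoder b i x Ox).1 (df2 j i)).1 (dM (df x Ox i) (rhoder2 b i j x Ox).1).1.
  have [_ ->] := dM (rhoder b i x Ox).1 (df2 j i).
  by have [_ ->] := dM (df x Ox i) (rhoder2 b i j x Ox).1.
set H := rho_of P b x.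
set S := fun i j => \sum_(r < n) b r * partial i (partial j (l r)) x.
have LHS : Lop g P a (fun y => rho_of P b y * f y) x =
  \sum_(i < d) \sum_(j < d) g i j x *
     ((H * partial i (partial j f) x + partial j f x * (H * q b i x)) +
      (f x * (H * q b i x * q b j x + H * S i j) + (H * q b j x) * partial i f x)) +
  \sum_(i < d) (\sum_(j < d) (partial j (g i j) x + g i j x * - q b j x)) *
      (H * partial i f x + f x * (H * q b i x)).
  rewrite /Lop; congr (_ + _).
    apply: eq_bigr => i _; apply: eq_bigr => j _.
    by rewrite d2 (rhoder2 b i j x Ox).2 !(rhoder b _ x Ox).2.
  apply: eq_bigr => i _; rewrite (drE a i x Ox) (d1 i x Ox) (rhoder b i x Ox).2.
  by congr (_ * _); apply: eq_bigr => j _; rewrite /b qN opprK.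
have T : Lop g P b f x =
  \sum_(i < d) \sum_(j < d) g i j x * partial i (partial j f) x +
  \sum_(i < d) (\sum_(j < d) (partial j (g i j) x + g i j x * q b j x)) * partial i f x.
  rewrite /Lop; congr (_ + _).
  by apply: eq_bigr => i _; rewrite (drE b i x Ox).
have H0 : H != 0 by rewrite /H (rhoE b x Ox) gt_eqF // expR_gt0.
rewrite /htransform LHS.
rewrite (@alg2 R d (fun i j => g i j x) (fun i j => partial j (g i j) x)
  (fun i => q b i x) (fun i => partial i f x) (fun i j => partial i (partial j f) x)
  (fun i j => H * q b i x * q b j x + H * S i j) H (f x)
  (fun i j => gsym i j x Ox)).
rewrite -T.
have P1 := part1 a x Ox; rewrite (part1_raw a x Ox) /= -/b -/H in P1.
rewrite P1 -/H.
field.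
exact: H0.
Qed.

End Main.

Theorem theorem4p2 (R : realType) (d n : nat) (Omega : set 'rV[R]_d)
  (g : 'I_d -> 'I_d -> 'rV[R]_d -> R) (P : 'I_n -> 'rV[R]_d -> R)
  (L : 'I_d -> 'I_n -> 'rV[R]_d -> R) :
  open Omega ->
  (forall i j x, Omega x -> g i j x = g j i x) ->
  (forall x, Omega x -> forall v : 'rV[R]_d, v != 0 ->
       0 < \sum_(i < d) \sum_(j < d) v 0 i * g i j x * v 0 j) ->
  (forall i j, poly_deg_le 2 (g i j)) ->
  (forall r, poly_fun (P r)) ->
  (forall r x, Omega x -> 0 < P r x) ->
  (forall i r, poly_deg_le 1 (L i r)) ->
  (forall i r x, Omega x ->
       carre_du_champ g (fun y => y 0 i) (fun y => ln (P r y)) x = L i r x) ->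
  exists c : 'I_n -> R, forall alpha : 'I_n -> R,
    let h := rho_of P (fun r => - alpha r) in
    let lambda := - (\sum_(r < n) alpha r * c r) in
    (forall x, Omega x -> Lop g P alpha h x = lambda * h x) /\
    (forall f, smooth_on Omega f -> forall x, Omega x ->
       htransform (Lop g P alpha) h lambda f x = Lop g P (fun r => - alpha r) f x).
Proof.
move=> oO gsym _ gpoly Ppoly Ppos Lpoly LE.
have gpol : forall i j, Pol (g i j) by move=> i j; exact: Pol_poly (gpoly i j).
have Ppol : forall r, Pol (P r) by move=> r; case: (Ppoly r) => m Hm; exact: Pol_poly Hm.
have Laff : forall i r, Aff (L i r) by move=> i r; exact: Aff_poly1 (Lpoly i r).
exists (fun r => \sum_(i < d) partial i (L i r) 0) => alpha /=; split.
  move=> x Ox.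
  exact: (@part1 R d n Omega g P oO gpol Ppol Ppos L gsym Laff LE alpha x Ox).
move=> f sm x Ox.
exact: (@part2 R d n Omega g P oO gpol Ppol Ppos L gsym Laff LE alpha f x sm Ox).
Qed.
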